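(* Let $K\subset\mathbb R^d$ be compact, $\varepsilon>0$, $r>0$ and $\mu\in\mathcal F(K)$. There exists $\delta>0$ such that every $\nu\in\mathcal P(K)$ with $L(\mu,\nu)<\delta$ satisfies $I_\nu(r,1)\le\log2+(1-\varepsilon)I_\mu(2r,1)$.
   Context: $\mathcal P(K)$ is the set of Borel probability measures on $K$, $\mathcal F(K)$ the subset of those with finite support. $L$ is the Fortet–Mourier metric $L(\mu,\nu)=\sup_f|\int fd\mu-\int fd\nu|$ over $f:K\to\mathbb R$ with $|f|\le1$ and Lipschitz constant $\le1$. $B(x,r)$ is the open ball and $I_\mu(r,1)=\int_K\log\mu(B(x,r))\,d\mu(x)$. *)

(* Defs.v *)
From HB Require Import structures.
From mathcomp Require Import all_boot all_order all_algebra.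
From mathcomp Require Import all_classical all_reals all_analysis.
Set Implicit Arguments. Unset Strict Implicit. Unset Printing Implicit Defensive.
Import Order.TTheory GRing.Theory Num.Theory.
Import numFieldNormedType.Exports.
Local Open Scope classical_set_scope.
Local Open Scope ring_scope.

Definition edist (R : realType) (d : nat) (x y : 'rV[R]_d) : R :=
  Num.sqrt (\sum_(i < d) (x ord0 i - y ord0 i) ^+ 2).

Definition eball (R : realType) (d : nat) (x : 'rV[R]_d) (r : R) : set 'rV[R]_d :=
  [set y | edist x y < r].

(* R^d with its Borel sigma-algebra (generated by the open sets; the
   library topology on 'rV[R]_d is the product topology, which coincides
   with the Euclidean one). *)
Definition Rd (R : realType) (d : nat) := g_sigma_algebraType (@open 'rV[R]_d).

(* mu is (the extension by zero of) a Borel probability measure on K *)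
Definition prob_on (R : realType) (d : nat) (K : set 'rV[R]_d)
  (mu : probability (Rd R d) R) : Prop :=
  mu (~` K) = 0%E.

Definition finite_supp (R : realType) (d : nat) (mu : probability (Rd R d) R) : Prop :=
  exists S : set 'rV[R]_d, finite_set S /\ mu (~` S) = 0%E.

Definition FM_test (R : realType) (d : nat) (K : set 'rV[R]_d) (f : 'rV[R]_d -> R) : Prop :=
  (forall x, K x -> `|f x| <= 1) /\
  (forall x y, K x -> K y -> `|f x - f y| <= edist x y).

Definition FM (R : realType) (d : nat) (K : set 'rV[R]_d)
  (mu nu : probability (Rd R d) R) : \bar R :=
  ereal_sup [set (`| Rintegral mu K f - Rintegral nu K f |)%:E
            | f in [set f | FM_test K f]].

Definition elog (R : realType) (v : \bar R) : \bar R :=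
  if v == 0%E then -oo%E else if v == +oo%E then +oo%E else (ln (fine v))%:E.

Definition Ient (R : realType) (d : nat) (K : set 'rV[R]_d)
  (mu : probability (Rd R d) R) (r : R) : \bar R :=
  (\int[mu]_(x in K) elog (mu (eball x r)))%E.

(* Main.v *)
Require Import Defs.
From HB Require Import structures.
From mathcomp Require Import all_boot all_order all_algebra.
From mathcomp Require Import all_classical all_reals all_analysis.
From mathcomp Require Import measurable_realfun.
From mathcomp Require Import ring lra.
Require Import Defs.
Set Implicit Arguments. Unset Strict Implicit.
Import Order.TTheory GRing.Theory Num.Theory.
Import numFieldNormedType.Exports.
Local Open Scope classical_set_scope.
Local Open Scope ring_scope.

Section Geo.
Variables (R : realType) (d : nat).
Implicit Types (x y z : 'rV[R]_d).

Lemma cauchy_schwarz (n : nat) (u v : 'I_n -> R) :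
  (\sum_i u i * v i) ^+ 2 <= (\sum_i u i ^+ 2) * (\sum_i v i ^+ 2).
Proof.
have H : \sum_i \sum_j (u i * v j - u j * v i) ^+ 2 =
   2 * ((\sum_i u i ^+ 2) * (\sum_i v i ^+ 2) - (\sum_i u i * v i) ^+ 2).
  transitivity (\sum_i \sum_j (u i ^+ 2 * v j ^+ 2 + v i ^+ 2 * u j ^+ 2
      - 2 * ((u i * v i) * (u j * v j)))).
    by apply: eq_bigr => i _; apply: eq_bigr => j _; ring.
  under eq_bigr do rewrite sumrB big_split /= -!mulr_sumr.
  rewrite sumrB big_split /= -!mulr_suml -mulr_sumr -mulr_suml.
  rewrite [X in _ + X - _]mulrC expr2; ring.
have : 0 <= \sum_i \sum_j (u i * v j - u j * v i) ^+ 2.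
  by apply: sumr_ge0 => i _; apply: sumr_ge0 => j _; exact: sqr_ge0.
rewrite H; lra.
Qed.

Lemma ed_ge0 x y : 0 <= edist x y.
Proof. exact: sqrtr_ge0. Qed.

Lemma ed_xx x : edist x x = 0.
Proof. by rewrite /edist big1 ?sqrtr0// => i _; rewrite subrr expr0n. Qed.

Lemma ed_C x y : edist x y = edist y x.
Proof. by rewrite /edist; congr Num.sqrt; apply: eq_bigr => i _; rewrite -opprB sqrrN. Qed.

Lemma ed_tri x y z : edist x z <= edist x y + edist y z.
Proof.
rewrite /edist.
set u := fun i => x ord0 i - y ord0 i.
set v := fun i => y ord0 i - z ord0 i.
have -> : \sum_(i < d) (x ord0 i - z ord0 i) ^+ 2 = \sum_i (u i + v i) ^+ 2.
  by apply: eq_bigr => i _; rewrite /u /v; congr (_ ^+ 2); ring.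
rewrite -/(\sum_i u i ^+ 2) -/(\sum_i v i ^+ 2).
set A := \sum_i u i ^+ 2; set B := \sum_i v i ^+ 2.
have A0 : 0 <= A by apply: sumr_ge0 => i _; exact: sqr_ge0.
have B0 : 0 <= B by apply: sumr_ge0 => i _; exact: sqr_ge0.
have E : \sum_i (u i + v i) ^+ 2 = A + B + 2 * \sum_i u i * v i.
  rewrite /A /B -big_split mulr_sumr -big_split /=; apply: eq_bigr => i _; ring.
have CS := cauchy_schwarz u v.
have C : \sum_i u i * v i <= Num.sqrt A * Num.sqrt B.
  rewrite -(ler_sqrt _ (mulr_ge0 A0 B0)) in CS.
  have h2 := sqrtr_sqr (\sum_i u i * v i).
  have h3 := sqrtrM B A0.
  have h1 := ler_norm (\sum_i u i * v i).
  rewrite h2 h3 in CS; exact: le_trans h1 CS.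
have sA := sqrtr_ge0 A; have sB := sqrtr_ge0 B.
rewrite -(ger0_norm (addr_ge0 sA sB)) -sqrtr_sqr ler_sqrt ?sqr_ge0 // E.
have -> : (Num.sqrt A + Num.sqrt B) ^+ 2 = Num.sqrt A ^+ 2 + Num.sqrt B ^+ 2 + 2 * (Num.sqrt A * Num.sqrt B) by ring.
rewrite !sqr_sqrtr //; lra.
Qed.

Lemma ed_eq0 x y : edist x y = 0 -> x = y.
Proof.
move=> /eqP; rewrite /edist sqrtr_eq0 => H.
have H0 : \sum_(i < d) (x ord0 i - y ord0 i) ^+ 2 = 0.
  by apply/eqP; rewrite eq_le H /=; apply: sumr_ge0 => i _; exact: sqr_ge0.
move/psumr_eq0P: H0 => H1.
apply/matrixP => i j; rewrite (ord1 i).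
have := H1 (fun k _ => sqr_ge0 _) j isT; move/eqP; rewrite sqrf_eq0 subr_eq0 => /eqP //.
Qed.

End Geo.

Section Meas.
Variables (R : realType) (d : nat).

Lemma eball_open (x : 'rV[R]_d) r : open (eball x r).
Proof.
rewrite openE => y; rewrite /eball /= => Hy.
rewrite /interior; apply/nbhs_ballP.
set c := r - edist x y.
have c0 : 0 < c by rewrite /c subr_gt0.
set n : R := d%:R.
have n0 : 0 <= n by rewrite /n ler0n.
set e := c / (n + 1).
have e0 : 0 < e by rewrite /e divr_gt0 // ltr_wpDl.
have ce : c = e * (n + 1) by rewrite /e mulfVK // gt_eqF // ltr_wpDl.
exists e => //= z [_ Bz].
change (edist x z < r); apply: (le_lt_trans (ed_tri x y z)).
rewrite -ltrBrDl -/c.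
have H : \sum_(i < d) (y ord0 i - z ord0 i) ^+ 2 <= n * e ^+ 2.
  rewrite (_ : n * e ^+ 2 = \sum_(i < d) e ^+ 2); last by rewrite sumr_const card_ord mulr_natl.
  apply: ler_sum => i _.
  have := Bz ord0 i; rewrite /ball /= => Hi.
  rewrite -real_normK ?num_real //.
  have := normr_ge0 (y ord0 i - z ord0 i); nra.
rewrite /edist -(ger0_norm (ltW c0)) -sqrtr_sqr ltr_sqrt ?exprn_gt0 //.
apply: (le_lt_trans H); rewrite ce; nra.
Qed.

Lemma open_meas (A : set 'rV[R]_d) : open A -> measurable (A : set (Rd R d)).
Proof. move=> oA; exact: (@sub_sigma_algebra _ setT (@open _)). Qed.

Lemma eball_meas (x : 'rV[R]_d) r : measurable (eball x r : set (Rd R d)).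
Proof. apply: open_meas; exact: eball_open. Qed.

Lemma set1_meas (a : 'rV[R]_d) : measurable ([set a] : set (Rd R d)).
Proof.
have : closed [set a].
  by apply: accessible_closed_set1; apply: hausdorff_accessible; exact: norm_hausdorff.
move=> /closed_openC /open_meas /measurableC; rewrite setCK; exact.
Qed.

Lemma compact_meas (K : set 'rV[R]_d) : compact K -> measurable (K : set (Rd R d)).
Proof.
move=> /(compact_closed (@norm_hausdorff _ _)) /closed_openC /open_meas /measurableC.
by rewrite setCK.
Qed.
End Meas.

Section Integ.
Local Open Scope ereal_scope.
Context dd (T : measurableType dd) (R : realType).
Variable mu : {measure set T -> \bar R}.
Import HBNNSimple.

Lemma nn_mono (D : set T) (f g : T -> \bar R) :
  (forall x, D x -> 0 <= f x) -> (forall x, D x -> f x <= g x) ->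
  \int[mu]_(x in D) f x <= \int[mu]_(x in D) g x.
Proof.
move=> f0 fg.
have g0 x : D x -> 0 <= g x by move=> Dx; exact: le_trans (f0 _ Dx) (fg _ Dx).
rewrite !ge0_integralE //.
apply: ereal_sup_le => _ [h hf <-]; exists h => //= x.
apply: le_trans (hf x) _; rewrite /patch; case: ifP => // /[1!inE] Dx.
exact: fg.
Qed.

Lemma nn_le_ae (D N : set T) (f G : T -> \bar R) :
  measurable D -> measurable N -> mu N = 0 -> measurable_fun D G ->
  (forall x, D x -> 0 <= f x) -> (forall x, D x -> 0 <= G x) ->
  (forall x, D x -> ~ N x -> f x <= G x) ->
  \int[mu]_(x in D) f x <= \int[mu]_(x in D) G x.
Proof.
move=> mD mN N0 mG f0 G0 fG.
rewrite [X in X <= _]ge0_integralE //.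
apply: ge_ereal_sup => _ [h hf <-].
have mGD : measurable_fun setT (G \_ D) by exact/(measurable_restrictT _ _).1.
have GD0 x : 0 <= (G \_ D) x by rewrite /patch; case: ifP => // /[1!inE]; exact: G0.
rewrite -integralT_nnsfun (@ge0_negligible_integral _ _ _ mu setT N) //; last first.
- by move=> x _; rewrite lee_fin; exact: fun_ge0.
- by apply/measurable_EFinP; exact: measurable_funPT.
apply: (@le_trans _ _ (\int[mu]_(x in setT `\` N) (G \_ D) x)).
  apply: ge0_le_integral => //.
  - exact: measurableD.
  - by move=> x _; rewrite lee_fin; exact: fun_ge0.
  - by apply/measurable_EFinP; apply: measurable_funTS; exact: measurable_funPT.
  - exact: measurable_funTS mGD.
  - move=> x [_ Nx]; apply: le_trans (hf x) _.
    rewrite /patch; case: ifP => // /[1!inE] Dx; exact: fG.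
rewrite [X in _ <= X]integral_mkcond.
apply: ge0_subset_integral => //; exact: measurableD.
Qed.

End Integ.

Lemma clamp_lip (R : realType) (a b u v : R) : a <= b ->
  `|Num.min b (Num.max a u) - Num.min b (Num.max a v)| <= `|u - v|.
Proof.
move=> ab.
have h1 : u - v <= `|u - v| := ler_norm _.
have h2 : v - u <= `|u - v| by rewrite distrC; exact: ler_norm.
rewrite ler_norml; rewrite !minEle !maxEle.
case: (leP a u) => ?; case: (leP a v) => ?; case: (leP b u) => ?;
  case: (leP b v) => ?; case: (leP b a) => ?; apply/andP; split; lra.
Qed.

Section Main.
Variables (R : realType) (d : nat).
Local Notation V := 'rV[R]_d.

Definition bump (c : V) (al be : R) (y : V) : R :=
  Num.min be (Num.max 0 (al - edist y c)).

Lemma bump_ge0 c al be y : 0 <= be -> 0 <= bump c al be y.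
Proof.
move=> b0; rewrite /bump !minEle !maxEle; set t := al - edist y c.
by case: (leP 0 t) => ?; case: (leP be t) => ?; case: (leP be 0) => ?; lra.
Qed.

Lemma bump_le c al be y : bump c al be y <= be.
Proof.
rewrite /bump !minEle !maxEle; set t := al - edist y c.
by case: (leP 0 t) => ?; case: (leP be t) => ?; case: (leP be 0) => ?; lra.
Qed.

Lemma bump0 c al be y : 0 <= be -> al <= edist y c -> bump c al be y = 0.
Proof.
move=> b0 h; rewrite /bump !minEle !maxEle; set t := al - edist y c.
have : t <= 0 by rewrite /t; lra.
by case: (leP 0 t) => ?; case: (leP be t) => ?; case: (leP be 0) => ?; lra.
Qed.

Lemma bump_be c al be y : be <= al - edist y c -> bump c al be y = be.
Proof.
move=> h; rewrite /bump !minEle !maxEle; move: h; set t := al - edist y c => h.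
by case: (leP 0 t) => ?; case: (leP be t) => ?; case: (leP be 0) => ?; lra.
Qed.

Lemma bump_test (K : set V) c al be : 0 <= be <= 1 -> FM_test K (bump c al be).
Proof.
move=> /andP[b0 b1]; split.
  move=> x _; rewrite ger0_norm ?bump_ge0 //; exact: le_trans (bump_le _ _ _ _) b1.
move=> x y _ _; rewrite /bump.
have H := clamp_lip (al - edist x c) (al - edist y c) b0. apply: le_trans H _.
have t1 := ed_tri x y c.
have t2 := ed_tri y x c.
have t3 := ed_C y x.
rewrite ler_norml; apply/andP; split; lra.
Qed.

Lemma probK (K : set V) (nu : probability (Rd R d) R) (A : set V) :
  measurable (K : set (Rd R d)) -> prob_on K nu -> measurable (A : set (Rd R d)) ->
  nu A = nu (A `&` K).
Proof.
move=> mK nuK mA.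
have mAK : measurable (A `&` K : set (Rd R d)) by exact: measurableI.
have mAC : measurable (A `&` ~` K : set (Rd R d)) by apply: measurableI => //; exact: measurableC.
apply/eqP; rewrite eq_le; apply/andP; split; last first.
  by apply: le_measure; rewrite ?inE //; exact: subIsetl.
have eA : A = (A `&` K) `|` (A `&` ~` K) by rewrite -setIUr setUv setIT.
rewrite [X in (nu X <= _)%E]eA.
apply: le_trans (measureU2 _ _ _) _ => //.
have : (nu (A `&` ~` K) <= 0)%E.
  rewrite -nuK; apply: le_measure; rewrite ?inE //; exact: measurableC.
have : (0 <= nu (A `&` ~` K))%E by exact: measure_ge0.
move=> _ h1; rewrite -[X in (_ <= X)%E]adde0; apply: leeD => //.
Qed.

Lemma FM_ub (K : set V) (mu nu : probability (Rd R d) R) h :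
  FM_test K h -> ((`|Rintegral mu K h - Rintegral nu K h|)%:E <= FM K mu nu)%E.
Proof. by move=> Hh; apply: ereal_sup_ubound; exists h. Qed.

Lemma Rint_between (m : {measure set (Rd R d) -> \bar R}) (D : set V) (h : V -> R) lo hi :
  (lo%:E <= \int[m]_(x in D) (h x)%:E)%E -> (\int[m]_(x in D) (h x)%:E <= hi%:E)%E ->
  lo <= Rintegral m D h <= hi.
Proof.
rewrite /Rintegral; move: (\int[m]_(x in D) (h x)%:E)%E => I.
by case: I => [x| |] //=; rewrite !lee_fin => -> ->.
Qed.

End Main.

Lemma seq_lb (R : realType) (T : eqType) (s : seq T) (F : T -> R) :
  (forall a, a \in s -> 0 < F a) -> exists2 c, 0 < c & forall a, a \in s -> c <= F a.
Proof.
elim: s => [|x s IH] H; first by exists 1 => //.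
have [c c0 cle] : exists2 c, 0 < c & forall a, a \in s -> c <= F a.
  by apply: IH => a as_; apply: H; rewrite in_cons as_ orbT.
have Fx : 0 < F x by apply: H; rewrite in_cons eqxx.
exists (Num.min c (F x)); first by rewrite lt_min c0 Fx.
move=> a; rewrite in_cons => /orP[/eqP->|as_]; first by rewrite ge_min lexx orbT.
by rewrite ge_min cle.
Qed.

Section Aux.
Variables (R : realType) (d : nat).
Local Notation V := 'rV[R]_d.
Local Notation RD := (Rd R d).

Lemma set_cons (a : V) (s : seq V) : [set` (a :: s)] = [set a] `|` [set` s].
Proof.
apply/seteqP; split => y /=; rewrite in_cons.
  by case/orP => [/eqP ->|ys]; [left|right].
by case => [->|ys]; rewrite ?eqxx ?ys ?orbT.
Qed.

Lemma fin_meas (s : seq V) : measurable ([set` s] : set RD).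
Proof.
elim: s => [|a s IH]; first by rewrite (_ : [set` [::]] = set0) //; apply/seteqP; split.
by rewrite set_cons; apply: measurableU => //; exact: set1_meas.
Qed.

Lemma fin_null (mu : {measure set RD -> \bar R}) (s : seq V) :
  (forall a, a \in s -> mu [set a] = 0%E) -> mu [set` s] = 0%E.
Proof.
elim: s => [|a s IH] H.
  by rewrite (_ : [set` [::]] = set0) ?measure0 //; apply/seteqP; split.
rewrite set_cons; apply/eqP; rewrite eq_le measure_ge0 andbT.
apply: le_trans (measureU2 _ (set1_meas _) (fin_meas _)) _.
rewrite [X in (X + _ <= _)%E](_ : _ = 0%E); last exact: H (mem_head _ _).
rewrite [X in (_ + X <= _)%E](_ : _ = 0%E) ?adde0 //.
by apply: IH => b bs; apply: H; rewrite in_cons bs orbT.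
Qed.

Lemma atoms (K : set V) (mu : probability RD R) :
  measurable (K : set RD) -> prob_on K mu -> finite_supp mu ->
  exists p : seq V, [/\ uniq p, (forall a, a \in p -> K a /\ (0 < mu [set a])%E) &
     mu (~` [set` p]) = 0%E].
Proof.
move=> mK muK [S [/finite_seqP[s ->] Sn]].
exists [seq a <- undup s | (0 < mu [set a])%E]; split.
- exact/filter_uniq/undup_uniq.
- move=> a; rewrite mem_filter => /andP[pa _]; split => //.
  have [//|nKa] := pselect (K a).
  have : (mu [set a] <= mu (~` K))%E.
    apply: le_measure; rewrite ?inE; [exact: set1_meas | exact: measurableC |].
    by move=> y ->.
  by rewrite muK => /(lt_le_trans pa); rewrite ltxx.
- set z := [seq a <- s | mu [set a] == 0%E].
  have sub : ~` [set` [seq a <- undup s | (0 < mu [set a])%E]] `<=` ~` [set` s] `|` [set` z].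
    move=> y /= ny; have [ys|] := boolP (y \in s); last by left.
    right; rewrite /z mem_filter ys andbT.
    move: ny; rewrite mem_filter mem_undup ys andbT.
    by rewrite lt_neqAle measure_ge0 andbT eq_sym => /negP/negPn.
  have mC : measurable (~` [set` s] : set RD) by apply: measurableC; exact: fin_meas.
  apply/eqP; rewrite eq_le measure_ge0 andbT.
  apply: le_trans (le_measure _ _ _ sub) _; rewrite ?inE //.
  + apply: measurableC; exact: fin_meas.
  + by apply: measurableU => //; exact: fin_meas.
  apply: le_trans (measureU2 _ mC (fin_meas _)) _.
  rewrite [X in (X + _ <= _)%E](_ : _ = 0%E); last exact: Sn.
  rewrite [X in (_ + X <= _)%E](_ : _ = 0%E) ?adde0 //.
  by apply: fin_null => a; rewrite mem_filter => /andP[/eqP].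
Qed.

End Aux.

Section Gen.
Context dd (T : measurableType dd) (R : realType).
Variable mu : {measure set T -> \bar R}.

Lemma mind (D A : set T) (k : R) : measurable A ->
  measurable_fun D (fun x => k * \1_A x).
Proof. by move=> mA; apply: measurable_funM => //; exact: measurable_indic. Qed.

Lemma msumR (I : Type) (s : seq I) (F : I -> T -> R) (D : set T) :
  (forall i, measurable_fun D (F i)) -> measurable_fun D (fun x => \sum_(i <- s) F i x).
Proof.
move=> mF; elim: s => [|i s IH].
  by under eq_fun do rewrite big_nil; exact: measurable_cst.
under eq_fun do rewrite big_cons; exact: measurable_funD.
Qed.

Lemma int_indic_scale (D A : set T) (k : R) : measurable D -> measurable A -> 0 <= k ->
  (\int[mu]_(x in D) (k * \1_A x)%:E = k%:E * mu (A `&` D))%E.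
Proof.
move=> mD mA k0.
rewrite (eq_integral (fun x => (k%:E * (\1_A x)%:E)%E)); last by move=> x _; rewrite EFinM.
rewrite ge0_integralZl_EFin //; first by rewrite integral_indic.
by apply/measurable_EFinP; exact: measurable_indic.
Qed.

Lemma Ient_neg (D : set T) (g : T -> \bar R) : (forall x, D x -> (g x <= 0)%E) ->
  (\int[mu]_(x in D) g x = - \int[mu]_(x in D) g^\- x)%E.
Proof.
move=> g0; rewrite integralE (@integral0_eq _ _ _ mu D (g^\+)%E) ?sub0e // => x Dx.
by rewrite funeposE maxEle; case: leP => // h; have := g0 x Dx; rewrite leNgt h.
Qed.

End Gen.

Section Elog.
Variable R : realType.
Local Open Scope ereal_scope.

Lemma elog_fin (t : R) : (0 < t)%R -> elog t%:E = (ln t)%:E.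
Proof. by move=> t0; rewrite /elog eqe gt_eqF. Qed.

Lemma elog_le (v : \bar R) (t : R) : (0 < t)%R -> 0 <= v -> v <= t%:E -> elog v <= (ln t)%:E.
Proof.
move=> t0; case: v => [x| |] //= x0 xt.
rewrite /elog eqe; case: ifPn => [_|xn0]; first exact: leNye.
rewrite /=.
rewrite lee_fin in x0; rewrite lee_fin in xt.
by rewrite lee_fin ler_ln ?posrE // lt_neqAle eq_sym xn0 x0.
Qed.

Lemma elog_le0 (v : \bar R) : 0 <= v -> v <= 1 -> elog v <= 0.
Proof. by move=> v0 v1; have := elog_le ltr01 v0 v1; rewrite ln1. Qed.

End Elog.

Lemma min3 (R : realType) (a b c : R) : 0 < a -> 0 < b -> 0 < c ->
  exists t, [/\ 0 < t, t <= a, t <= b & t <= c].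
Proof.
move=> a0 b0 c0; exists (Num.min a (Num.min b c)); split.
- by rewrite !lt_min a0 b0 c0.
- by rewrite ge_min lexx.
- by rewrite ge_min; apply/orP; right; rewrite ge_min lexx.
- by rewrite ge_min; apply/orP; right; rewrite ge_min lexx orbT.
Qed.

Section Main2.
Variables (R : realType) (d : nat).
Local Notation V := 'rV[R]_d.
Local Notation RD := (Rd R d).

Lemma prob_fin (P : probability RD R) (A : set V) : measurable (A : set RD) ->
  P A = (fine (P A))%:E /\ 0 <= fine (P A) <= 1.
Proof.
move=> mA; have h0 := measure_ge0 P A; have h1 := probability_le1 P mA.
have f : P A \is a fin_num by rewrite ge0_fin_numE // (le_lt_trans h1) // ltey.
split; first by rewrite fineK.
apply/andP; split; rewrite -lee_fin fineK //.
Qed.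

Lemma int_le_tot (P : probability RD R) (K : set V) (h : V -> R) c :
  measurable (K : set RD) -> 0 <= c -> (forall x, 0 <= h x <= c) ->
  (\int[P]_(x in K) (h x)%:E <= c%:E)%E.
Proof.
move=> mK c0 hc.
apply: (@le_trans _ _ (\int[P]_(x in K) (c * \1_setT x)%:E)%E).
  apply: nn_mono => x _; first by rewrite lee_fin; case/andP: (hc x).
  by rewrite lee_fin indicT mulr1; case/andP: (hc x).
rewrite int_indic_scale // -[X in (_ <= X)%E]mule1; apply: lee_wpmul2l; rewrite ?lee_fin //.
by rewrite setTI; exact: probability_le1.
Qed.

End Main2.

Unset Implicit Arguments.
Theorem corollary2p4 (R : realType) (d : nat) (K : set 'rV[R]_d)
  (eps r : R) (mu : probability (Rd R d) R) :
  compact K -> 0 < eps -> 0 < r ->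
  prob_on K mu -> finite_supp mu ->
  exists2 delta : R, 0 < delta &
    forall nu : probability (Rd R d) R, prob_on K nu ->
      (FM K mu nu < delta%:E)%E ->
      (Ient K nu r <= (ln 2 : R)%:E + (1 - eps)%:E * Ient K mu (2 * r))%E.
Proof.
move=> cK eps0 r0 muK fsupp.
have mK := compact_meas cK.
have [p [up pK pnull]] := atoms mK muK fsupp.
have PK (P : probability (Rd R d) R) (A : set 'rV[R]_d) x : prob_on K P ->
    measurable (A : set (Rd R d)) -> P A = x -> P (A `&` K) = x.
  by move=> PKh mA <-; rewrite -probK.
pose m a := fine (mu [set a]).
pose M a := fine (mu (eball a (2 * r))).
have mE a : mu [set a] = (m a)%:E /\ 0 <= m a <= 1 := prob_fin mu (set1_meas a).
have ME a : mu (eball a (2 * r)) = (M a)%:E /\ 0 <= M a <= 1 := prob_fin mu (eball_meas a (2 * r)).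
have ma0 a : a \in p -> 0 < m a.
  by move=> ap; have [_ h] := pK a ap; rewrite (proj1 (mE a)) lte_fin in h.
have mM a : m a <= M a.
  rewrite -lee_fin -(proj1 (mE a)) -(proj1 (ME a)).
  apply: le_measure; rewrite ?inE; [exact: set1_meas| exact: eball_meas|].
  by move=> y ->; rewrite /eball /= ed_xx mulr_gt0.
have [m0 m0p m0le] := seq_lb ma0.
pose F (ab : 'rV[R]_d * 'rV[R]_d) := if ab.1 == ab.2 then 1 else edist ab.1 ab.2.
have Fpos ab : ab \in [seq (a, b) | a <- p, b <- p] -> 0 < F ab.
  move=> _; rewrite /F; case: eqP => [_|nab]; first exact: ltr01.
  rewrite lt_neqAle ed_ge0 andbT; apply/eqP => h; apply: nab; exact: ed_eq0.
have [D0 D0p D0le] := seq_lb Fpos.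
have sep a b : a \in p -> b \in p -> a != b -> D0 <= edist a b.
  move=> ap bp nab; have := D0le (a, b) (allpairs_f pair ap bp).
  by rewrite /F /= (negbTE nab).
have r20 : 0 < r / 2 by rewrite divr_gt0.
have [rho [rho0 rho1 rhor rhoD]] := min3 ltr01 r20 (divr_gt0 D0p (ltr0Sn _ 1)).
have [be [be0 be1 ber _]] := min3 ltr01 r20 r20.
have [e1 [e10 e11 e1eps _]] := min3 eps0 ltr01 ltr01.
exists (rho * be * e1 * m0); first by rewrite !mulr_gt0.
move=> nu nuK FMlt.
have FMb h : FM_test K h -> `|Rintegral mu K h - Rintegral nu K h| < rho * be * e1 * m0.
  by move=> Hh; rewrite -lte_fin; exact: le_lt_trans (FM_ub mu nu Hh) FMlt.
pose w a := fine (nu (eball a rho)).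
have wE a : nu (eball a rho) = (w a)%:E /\ 0 <= w a <= 1 := prob_fin nu (eball_meas a rho).
have W a : a \in p -> (1 - e1) * m a <= w a.
  move=> ap.
  pose h1 := bump a rho rho.
  have rho01 : 0 <= rho <= 1 by rewrite (ltW rho0) rho1.
  have T1 : FM_test K h1 := bump_test K a rho rho01.
  have h1b x : 0 <= h1 x <= rho by rewrite bump_ge0 ?(ltW rho0) // bump_le.
  have I1 : ((rho * m a)%:E <= \int[mu]_(x in K) (h1 x)%:E)%E.
    apply: (@le_trans _ _ (\int[mu]_(x in K) (rho * \1_[set a] x)%:E)%E).
      rewrite int_indic_scale //; [|exact: set1_meas|exact: ltW].
      rewrite [X in (_ <= _ * X)%E](_ : _ = (m a)%:E) ?EFinM //.
      exact: PK muK (set1_meas a) (proj1 (mE a)).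
    apply: nn_mono => x _; first by rewrite lee_fin; apply: mulr_ge0; [exact: ltW|rewrite indicE ler0n].
    rewrite lee_fin indicE; case: (boolP (x \in [set a])) => [/[1!inE] ->|_].
      by rewrite mulr1 /h1 bump_be // ed_xx subr0.
    by rewrite mulr0; case/andP: (h1b x).
  have I2 := int_le_tot mu mK (ltW rho0) h1b.
  have I3 : (0%:E <= \int[nu]_(x in K) (h1 x)%:E)%E.
    by apply: integral_ge0 => x _; rewrite lee_fin; case/andP: (h1b x).
  have I4 : (\int[nu]_(x in K) (h1 x)%:E <= (rho * w a)%:E)%E.
    apply: (@le_trans _ _ (\int[nu]_(x in K) (rho * \1_(eball a rho) x)%:E)%E).
      apply: nn_mono => x _; first by rewrite lee_fin; case/andP: (h1b x).
      rewrite lee_fin indicE; case: (boolP (x \in eball a rho)) => [_|].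
        by rewrite mulr1; case/andP: (h1b x).
      move/negP => hx.
      have hx' : rho <= edist x a.
        by rewrite ed_C leNgt; apply/negP => h; apply: hx; rewrite inE.
      by rewrite mulr0 /h1 bump0 // ltW.
    rewrite int_indic_scale //; [|exact: eball_meas|exact: ltW].
    rewrite [X in (_ * X <= _)%E](_ : _ = (w a)%:E) ?EFinM //.
    exact: PK nuK (eball_meas a rho) (proj1 (wE a)).
  have /andP[J1 J2] := Rint_between I1 I2.
  have /andP[J3 J4] := Rint_between I3 I4.
  have J5 := FMb h1 T1.
  have J6 := ler_norm (Rintegral mu K h1 - Rintegral nu K h1).
  have key : m a - w a < be * e1 * m0.
    rewrite -(ltr_pM2l rho0); nra.
  have k1 : be * e1 * m0 <= e1 * m0.
    rewrite -!mulrA; have := mulr_ge0 (ltW e10) (ltW m0p); nra.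
  have k2 : e1 * m0 <= e1 * m a by apply: ler_wpM2l; [exact: ltW|exact: m0le].
  nra.
have U a : a \in p -> (nu (eball a (r + rho)) <= (2 * M a)%:E)%E.
  move=> ap.
  pose h2 := bump a (2 * r) be.
  have be01 : 0 <= be <= 1 by rewrite (ltW be0) be1.
  have T2 : FM_test K h2 := bump_test K a (2 * r) be01.
  have h2b x : 0 <= h2 x <= be by rewrite bump_ge0 ?(ltW be0) // bump_le.
  have [uE u01] := prob_fin nu (eball_meas a (r + rho)).
  set u := fine (nu (eball a (r + rho))) in uE u01 *.
  have I1 : (\int[mu]_(x in K) (h2 x)%:E <= (be * M a)%:E)%E.
    apply: (@le_trans _ _ (\int[mu]_(x in K) (be * \1_(eball a (2 * r)) x)%:E)%E).
      apply: nn_mono => x _; first by rewrite lee_fin; case/andP: (h2b x).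
      rewrite lee_fin indicE; case: (boolP (x \in eball a (2 * r))) => [_|].
        by rewrite mulr1; case/andP: (h2b x).
      move/negP => hx.
      have hx' : 2 * r <= edist x a.
        by rewrite ed_C leNgt; apply/negP => h; apply: hx; rewrite inE.
      by rewrite mulr0 /h2 bump0 // ltW.
    rewrite int_indic_scale //; [|exact: eball_meas|exact: ltW].
    rewrite [X in (_ * X <= _)%E](_ : _ = (M a)%:E) ?EFinM //.
    exact: PK muK (eball_meas a (2 * r)) (proj1 (ME a)).
  have I2 : (0%:E <= \int[mu]_(x in K) (h2 x)%:E)%E.
    by apply: integral_ge0 => x _; rewrite lee_fin; case/andP: (h2b x).
  have I3 : ((be * u)%:E <= \int[nu]_(x in K) (h2 x)%:E)%E.
    apply: (@le_trans _ _ (\int[nu]_(x in K) (be * \1_(eball a (r + rho)) x)%:E)%E).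
      rewrite int_indic_scale //; [|exact: eball_meas|exact: ltW].
      rewrite [X in (_ <= _ * X)%E](_ : _ = u%:E) ?EFinM //.
      exact: PK nuK (eball_meas a (r + rho)) uE.
    apply: nn_mono => x _; first by rewrite lee_fin; apply: mulr_ge0; [exact: ltW|rewrite indicE ler0n].
    rewrite lee_fin indicE; case: (boolP (x \in eball a (r + rho))) => [|_].
      rewrite inE /eball /= ed_C => hx.
      by rewrite mulr1 /h2 bump_be //; lra.
    by rewrite mulr0; case/andP: (h2b x).
  have I4 := int_le_tot nu mK (ltW be0) h2b.
  have /andP[J1 J2] := Rint_between I2 I1.
  have /andP[J3 J4] := Rint_between I3 I4.
  have J5 := FMb h2 T2.
  have J6 := ler_norm (Rintegral nu K h2 - Rintegral mu K h2).
  rewrite distrC in J6.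
  have key : u - M a < rho * e1 * m0.
    rewrite -(ltr_pM2l be0); nra.
  have k1 : rho * e1 * m0 <= m0.
    rewrite -!mulrA; have em := mulr_ge0 (ltW e10) (ltW m0p).
    have : rho * (e1 * m0) <= e1 * m0 by nra.
    nra.
  have := m0le a ap; have := mM a.
  rewrite uE lee_fin; lra.
have disj a b x : a \in p -> b \in p -> eball a rho x -> eball b rho x -> a = b.
  move=> ap bp; rewrite /eball /= => ha hb; apply/eqP; apply: contraTT isT => nab.
  have := sep a b ap bp nab; have := ed_tri a x b; rewrite (ed_C x b).
  have : 2 * rho <= D0 by lra.
  lra.
pose g x := elog (nu (eball x r)).
have g0 x : (g x <= 0)%E.
  apply: elog_le0; [exact: measure_ge0| exact: probability_le1 (eball_meas _ _)].
pose c a := Num.max 0 (- ln (2 * M a)).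
pose H x := (\sum_(a <- p) (c a * \1_(eball a rho) x)%:E)%E.
have c0 a : 0 <= c a by rewrite /c le_max lexx.
have HI : (\int[nu]_(x in K) H x = (\sum_(a <- p) c a * w a)%:E)%E.
  rewrite /H ge0_integral_sum //; last first.
  - by move=> a x _; rewrite lee_fin; apply: mulr_ge0 => //; rewrite indicE ler0n.
  - by move=> a; apply/measurable_EFinP; apply: mind; exact: eball_meas.
  rewrite -sumEFin; apply: eq_bigr => a _.
  rewrite int_indic_scale //; last exact: eball_meas.
  rewrite [X in (_ * X)%E](_ : _ = (w a)%:E) ?EFinM //.
  exact: PK nuK (eball_meas a rho) (proj1 (wE a)).
have Mpos a : a \in p -> 0 < M a by move=> ap; exact: lt_le_trans (ma0 a ap) (mM a).
have Hle : (\int[nu]_(x in K) H x <= \int[nu]_(x in K) g^\- x)%E.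
  apply: nn_mono => x Kx.
    by apply: sume_ge0 => a _; rewrite lee_fin; apply: mulr_ge0 => //; rewrite indicE ler0n.
  have [[a ap xa]|nex] := pselect (exists2 a, a \in p & eball a rho x).
    rewrite /H (bigD1_seq a) //= big1_seq ?adde0 => [|b /andP[ba bp]]; last first.
      rewrite indicE; have -> : (x \in eball b rho) = false.
        apply/negP; rewrite inE => xb; move/eqP: ba; apply; exact: disj b a x bp ap xb xa.
      by rewrite mulr0.
    rewrite indicE (mem_set xa) mulr1.
    have gle : (g x <= (ln (2 * M a))%:E)%E.
      apply: elog_le; first by rewrite mulr_gt0 // Mpos.
        exact: measure_ge0.
      apply: le_trans (U a ap).
      apply: le_measure; rewrite ?inE; [exact: eball_meas|exact: eball_meas|].
      move=> y; rewrite /eball /= => xy.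
      have := ed_tri a x y; move: xa; rewrite /eball /= => xa; lra.
    rewrite funenegE /c EFin_max ge_max; apply/andP; split; rewrite le_max.
      by rewrite lexx orbT.
    by rewrite EFinN leeN2 gle.
  rewrite /H big1_seq; first exact: funeneg_ge0.
  move=> b /andP[_ bp]; rewrite indicE.
  have -> : (x \in eball b rho) = false.
    by apply/negP; rewrite inE => xb; apply: nex; exists b.
  by rewrite mulr0.
have sumw : \sum_(a <- p) w a <= 1.
  have finp : finite_set [set` p] by apply/finite_seqP; exists p.
  have mF : forall a, [set` p] a -> measurable (eball a rho : set (Rd R d)).
    by move=> a _; exact: eball_meas.
  have triv : trivIset [set` p] (fun a => eball a rho).
    by move=> a b /= ap bp [x [xa xb]]; exact: disj xa xb.
  have := measure_fin_bigcup nu finp triv mF.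
  rewrite -fsbig_seq // => hU.
  have := probability_le1 nu (fin_bigcup_measurable finp mF).
  rewrite hU (eq_bigr (fun a => (w a)%:E)); last by move=> a _; exact: (proj1 (wE a)).
  by rewrite sumEFin lee_fin.
pose Y := \sum_(a <- p) m a * (- ln (M a)).
have ln20 : 0 < ln (2 : R) by apply: ln_gt0; rewrite ltr1n.
have cw : - ln 2 + (1 - e1) * Y <= \sum_(a <- p) c a * w a.
  have term a : a \in p -> (- ln 2) * w a + (1 - e1) * (m a * (- ln (M a))) <= c a * w a.
    move=> ap.
    have hc : - ln 2 - ln (M a) <= c a.
      rewrite /c le_max; apply/orP; right.
      by rewrite lnM ?posrE ?Mpos // opprD.
    have hL : 0 <= - ln (M a) by rewrite oppr_ge0 ln_le0 //; case/andP: (proj2 (ME a)).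
    have hw := W a ap; have hw0 : 0 <= w a by case/andP: (proj2 (wE a)).
    nra.
  apply: (@le_trans _ _ (\sum_(a <- p) ((- ln 2) * w a + (1 - e1) * (m a * (- ln (M a)))))).
    rewrite big_split /= -!mulr_sumr -/Y; nra.
  rewrite big_seq_cond [X in _ <= X]big_seq_cond; apply: ler_sum => a /andP[ap _]; exact: term a ap.
pose f x := elog (mu (eball x (2 * r))).
have f0 x : (f x <= 0)%E.
  apply: elog_le0; [exact: measure_ge0| exact: probability_le1 (eball_meas _ _)].
have fY : (\int[mu]_(x in K) f^\- x <= Y%:E)%E.
  pose G x := (\sum_(a <- p) (- ln (M a)) * \1_[set a] x)%:E.
  have L0 a : 0 <= - ln (M a) by rewrite oppr_ge0 ln_le0 //; case/andP: (proj2 (ME a)).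
  apply: (@le_trans _ _ (\int[mu]_(x in K) G x)%E).
    apply: (@nn_le_ae _ _ _ mu K (~` [set` p]) _ G mK) => //.
    - by apply: measurableC; exact: fin_meas.
    - by apply/measurable_EFinP; apply: msumR => a; apply: mind; exact: set1_meas.
    - move=> x _; rewrite lee_fin; apply: sumr_ge0 => a _; apply: mulr_ge0; first exact: L0.
      by rewrite indicE ler0n.
    move=> x Kx nN.
    have xp : x \in p by exact: (contrapT nN).
    rewrite funenegE /f (proj1 (ME x)) elog_fin ?Mpos //.
    rewrite /G (bigD1_seq x) //= big1_seq ?addr0 => [|b /andP[bx _]]; last first.
      rewrite indicE; have -> : (x \in [set b]) = false.
        by apply/negP; rewrite inE => xb; move: bx; rewrite xb eqxx.
      by rewrite mulr0.
    rewrite indicE mem_set // mulr1 ge_max lexx /= lee_fin; exact: L0.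
  rewrite (@eq_integral _ _ _ mu K (fun x => \sum_(a <- p) ((- ln (M a)) * \1_[set a] x)%:E)%E); last first.
    by move=> x _; rewrite /G sumEFin.
  rewrite ge0_integral_sum //; last first.
  - by move=> a x _; rewrite lee_fin; apply: mulr_ge0; [exact: L0|rewrite indicE ler0n].
  - by move=> a; apply/measurable_EFinP; apply: mind; exact: set1_meas.
  rewrite /Y -sumEFin le_eqVlt; apply/orP; left; apply/eqP; apply: eq_bigr => a _.
  rewrite int_indic_scale //; last exact: set1_meas.
  rewrite [X in (_ * X)%E](_ : _ = (m a)%:E); first by rewrite EFinM muleC.
  exact: PK muK (set1_meas a) (proj1 (mE a)).
have fI0 : (0 <= \int[mu]_(x in K) f^\- x)%E by apply: integral_ge0 => x _; exact: funeneg_ge0.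
have [b [bE b0 bY]] : exists b : R, [/\ (\int[mu]_(x in K) f^\- x)%E = b%:E, 0 <= b & b <= Y].
  move: fI0 fY; case: (\int[mu]_(x in K) f^\- x)%E => [b| |] //= b0 bY.
  by exists b; split => //; rewrite -lee_fin.
rewrite /Ient (Ient_neg nu (fun x _ => g0 x)) (Ient_neg mu (fun x _ => f0 x)).
change (- (\int[nu]_(x in K) g^\- x) <= (ln 2)%:E + (1 - eps)%:E * - (\int[mu]_(x in K) f^\- x))%E.
rewrite bE.
have Lhs : (- (\int[nu]_(x in K) g^\- x) <= (- (- ln 2 + (1 - e1) * Y))%:E)%E.
  rewrite EFinN leeN2; apply: le_trans Hle; rewrite HI lee_fin; exact: cw.
apply: le_trans Lhs _.
rewrite -EFinN -EFinM -EFinD lee_fin.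
have : (1 - eps) * b <= (1 - e1) * b by nra.
have : (1 - e1) * b <= (1 - e1) * Y by nra.
lra.
Qed.
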